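(* Let $K$ be a field with $\mathrm{char}(K) = 0$ or $\mathrm{char}(K) > n$, let $1 \le d \le n$ and $N \ge n+d$. Then in $K[x_1,\dots,x_N]$, $$(S_N.\,e_n^d(x_1,\dots,x_n)) = (S_N.\,x_1\cdots x_d).$$
   Context: $e_n^d(x_1,\dots,x_n)$ denotes the elementary symmetric polynomial of degree $d$ in $x_1,\dots,x_n$. $S_N$ acts on $K[x_1,\dots,x_N]$ by permuting variables; $(S_N.g)$ denotes the ideal generated by the $S_N$-orbit of $g$. *)

(* Defs.v *)
From HB Require Import structures.
From mathcomp Require Import all_boot all_order all_algebra all_fingroup.
From mathcomp Require Export mpoly.
Set Implicit Arguments. Unset Strict Implicit. Unset Printing Implicit Defensive.
Import GRing.Theory.
Local Open Scope ring_scope.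

(* Variables x_1..x_N are 'X_0 .. 'X_(N-1) (0-indexed). *)

Definition esym_first (K : comRingType) (N n d : nat) : {mpoly K[N]} :=
  \sum_(h : {set 'I_N} | (#|h| == d) && [forall i in h, (i < n)%N])
     \prod_(i in h) 'X_i.

Definition prod_first (K : comRingType) (N d : nat) : {mpoly K[N]} :=
  \prod_(i : 'I_N | (i < d)%N) 'X_i.

Definition orbit_ideal (K : comRingType) (N : nat) (g : {mpoly K[N]})
  : {mpoly K[N]} -> Prop :=
  fun p => exists s : seq ('S_N * {mpoly K[N]}),
    p = \sum_(x <- s) x.2 * msym x.1 g.

(* Main.v *)
Require Import Defs.
From mathcomp Require Import all_boot all_order all_algebra all_fingroup.
From mathcomp Require Import mpoly.
From mathcomp Require Import ring zify.
Set Implicit Arguments. Unset Strict Implicit. Unset Printing Implicit Defensive.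
Import GRing.Theory.
Local Open Scope ring_scope.

Section S.
Variable K : fieldType.
Variable N : nat.
Local Notation MP := {mpoly K[N]}.

Inductive gen (S : MP -> Prop) : MP -> Prop :=
| gen0 : gen S 0
| genC c g p : S g -> gen S p -> gen S (c * g + p).

Lemma genD S p q : gen S p -> gen S q -> gen S (p + q).
Proof. move=> Hp Hq; elim: Hp => [|c g p' Sg _ IH]; first by rewrite add0r.
by rewrite -addrA; apply: genC. Qed.

Lemma genM S q p : gen S p -> gen S (q * p).
Proof. move=> Hp; elim: Hp => [|c g p' Sg _ IH]; first by rewrite mulr0; apply: gen0.
by rewrite mulrDr mulrA; apply: genC. Qed.

Lemma gen_in (S : MP -> Prop) g : S g -> gen S g.
Proof. by move=> Sg; rewrite -[g]addr0 -[g]mul1r; apply: genC => //; apply: gen0. Qed.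

Lemma genB S p q : gen S p -> gen S q -> gen S (p - q).
Proof. by move=> Hp Hq; apply: genD => //; rewrite -mulN1r; apply: genM. Qed.

Lemma gen_scale (S T : MP -> Prop) q p :
  (forall g, S g -> gen T (q * g)) -> gen S p -> gen T (q * p).
Proof. move=> H Hp; elim: Hp => [|c g p' Sg _ IH]; first by rewrite mulr0; apply: gen0.
rewrite mulrDr mulrCA; apply: genD IH; exact: genM (H g Sg). Qed.

Lemma gen_trans (S T : MP -> Prop) p :
  (forall g, S g -> gen T g) -> gen S p -> gen T p.
Proof. move=> H Sp; rewrite -[p]mul1r; apply: gen_scale Sp => g /H; by rewrite mul1r. Qed.

Lemma gen_eq (S : MP -> Prop) p q : gen S p -> p = q -> gen S q.
Proof. by move=> H <-. Qed.

Fixpoint es (s : seq 'I_N) (k : nat) : MP :=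
  match s with
  | [::] => if k is 0 then 1 else 0
  | b :: s' => if k is k'.+1 then es s' k + 'X_b * es s' k' else 1
  end.

Definition P (u : seq 'I_N) : MP := \prod_(i <- u) 'X_i.

Lemma es0 s : es s 0 = 1. Proof. by case: s. Qed.

Lemma esS b s k : es (b :: s) k.+1 = es s k.+1 + 'X_b * es s k. Proof. by []. Qed.

Lemma es_diff b c s k : ('X_b - 'X_c) * es s k = es (b :: s) k.+1 - es (c :: s) k.+1.
Proof. rewrite !esS; ring. Qed.

Lemma P_cons b u : P (b :: u) = 'X_b * P u. Proof. by rewrite /P big_cons. Qed.
Lemma P_cat u v : P (u ++ v) = P u * P v. Proof. by rewrite /P big_cat. Qed.
Lemma P_nil : P [::] = 1. Proof. by rewrite /P big_nil. Qed.


Lemma P_rcons u c : P (rcons u c) = P u * 'X_c.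
Proof. by rewrite -cats1 P_cat P_cons P_nil mulr1. Qed.

Lemma claim (S : MP -> Prop) (V : seq 'I_N) (k : nat) :
  (forall u b c, uniq (b :: c :: u) -> {subset (b :: c :: u) <= V} ->
     (size u).+1 = k -> gen S (('X_b - 'X_c) * P u)) ->
  forall s t i, uniq (t ++ s) -> {subset t ++ s <= V} -> (size t + i)%N = k ->
  gen S (P t * es s i - ('C(size s, i))%:R * (P t * P (take i s))).
Proof.
move=> Hrel; elim=> [|b s1 IH] t i Hu Hs Hk.
  case: i Hk => [|i] Hk /=; rewrite ?P_nil ?bin0 ?bin0n /= ?mulr1 ?mul1r ?mul0r ?subrr ?mulr0 ?subr0;
  exact: gen0.
case: i Hk => [|i] Hk.
  by rewrite es0 bin0 take0 P_nil mulr1 mul1r subrr; exact: gen0.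
have Hu' : uniq ((t ++ [:: b]) ++ s1) by rewrite -catA.
have Hs' : {subset (t ++ [:: b]) ++ s1 <= V} by rewrite -catA.
have Hu1 : uniq (t ++ s1).
  move: Hu; rewrite !cat_uniq /= => /and3P[ut /norP[_ ht] /andP[_ us]].
  by rewrite ut ht us.
have Hs1 : {subset t ++ s1 <= V}.
  move=> x xts; apply: Hs; move: xts; rewrite !mem_cat inE.
  by case/orP=> ->; rewrite ?orbT.
have IH1 := IH t i.+1 Hu1 Hs1 Hk.
have Hk2 : (size (t ++ [:: b]) + i)%N = k by by rewrite size_cat /= addn1 addSnnS.
have IH2 := IH (t ++ [:: b]) i Hu' Hs' Hk2.
rewrite esS /= P_cons binS natrD P_cat P_cons P_nil mulr1 in IH2 *.
have [lt|le] := ltnP i (size s1); last first.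
  rewrite bin_small ?ltnS // in IH1; rewrite bin_small ?ltnS //.
  by apply: gen_eq (genD IH1 IH2) _; ring.
set c := nth b s1 i.
rewrite (take_nth b lt) P_rcons in IH1.
have Hrl := Hrel (t ++ take i s1) b c.
have : gen S (('X_b - 'X_c) * P (t ++ take i s1)).
  apply: Hrl.
  - have Hw : uniq (t ++ b :: rcons (take i s1) c).
      have : uniq (take (size t + i.+2) (t ++ b :: s1)) by apply: take_uniq.
      by rewrite take_cat ltnNge leq_addr /= addKn /= (take_nth b lt).
    have Hp : perm_eq (t ++ b :: rcons (take i s1) c) (b :: c :: (t ++ take i s1)).
      apply/seq.permP => f; rewrite /= -cats1 !count_cat /= count_cat /=; lia.
    by rewrite -(perm_uniq Hp).
  - move=> x; rewrite !inE mem_cat => /or3P[/eqP->|/eqP->|/orP[xt|xs]]; apply: Hs.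
    + by rewrite mem_cat inE eqxx orbT.
    + by rewrite mem_cat inE mem_nth ?orbT.
    + by rewrite mem_cat xt.
    + by rewrite mem_cat inE (mem_take xs) !orbT.
  - by rewrite size_cat size_take lt -Hk addnS.
rewrite P_cat => H3.
apply: gen_eq (genD (genD IH1 IH2) (genM (- 'C(size s1, i.+1)%:R) H3)) _; ring.
Qed.


Lemma prime_dvd_fact p m : prime p -> (p %| m`!)%N -> (p <= m)%N.
Proof.
move=> pp; elim: m => [|m IH]; first by rewrite fact0 dvdn1 => /eqP p1; rewrite p1 in pp.
rewrite factS Euclid_dvdM // => /orP[/dvdn_leq -> //| /IH pm]; exact: leqW.
Qed.

Lemma binom_neq0 n k : (forall p, p \in [pchar K] -> (n < p)%N) -> (k <= n)%N ->
  ('C(n, k)%:R : K) != 0.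
Proof.
move=> hc kn; rewrite natf_neq0_pchar; apply/pnatP; first by rewrite bin_gt0.
move=> p pp pdiv; apply/negP => /hc; rewrite ltnNge; apply/negP/negPn.
apply: prime_dvd_fact pp _; apply: dvdn_trans pdiv _.
by rewrite -(bin_fact kn) dvdn_mulr.
Qed.

Definition Gk n' k (V : seq 'I_N) : MP -> Prop :=
  fun g => exists A, [/\ uniq A, {subset A <= V}, size A = n' & g = es A k].

Lemma Lk : forall k n' V, uniq V -> (k <= n')%N -> (n' + k <= size V)%N ->
  (forall p, p \in [pchar K] -> (n' < p)%N) ->
  forall u, uniq u -> {subset u <= V} -> size u = k -> gen (Gk n' k V) (P u).
Proof.
elim=> [|k IH] n' V uV kn nV hc u uu uV' su.
  case: u uu uV' su => // _ _ _; rewrite P_nil; apply: gen_in.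
  exists (take n' V); split.
  - exact: take_uniq.
  - by move=> x /mem_take.
  - by rewrite size_takel // -(addn0 n').
  - by rewrite es0.
set rest := take (n' - k.+1) [seq x <- V | x \notin u].
have sf : size [seq x <- V | x \notin u] = (size V - k.+1)%N.
  have Hp : perm_eq [seq x <- V | x \in u] u.
    apply: uniq_perm; [exact: filter_uniq | exact: uu |].
    by move=> x; rewrite mem_filter; case xu: (x \in u); rewrite //= uV'.
  have := count_predC (fun x => x \in u) V.
  rewrite -!size_filter (perm_size Hp) su => <-.
  by rewrite addKn.
set A := u ++ rest.
have uA : uniq A.
  rewrite cat_uniq uu take_uniq ?filter_uniq // andbT.
  apply/hasPn => x /mem_take; by rewrite mem_filter => /andP[].
have sA : {subset A <= V}.
  move=> x; rewrite mem_cat => /orP[/uV' //|/mem_take]; by rewrite mem_filter => /andP[].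
have szA : size A = n'.
  rewrite size_cat size_takel; first by move: su kn; clear; lia.
  by move: sf nV kn; clear; lia.
have tA : take k.+1 A = u by rewrite take_size_cat.
have n0 : (0 < n')%N by apply: leq_trans kn.
have Hrel : forall u' b c, uniq (b :: c :: u') -> {subset (b :: c :: u') <= V} ->
     (size u').+1 = k.+1 -> gen (Gk n' k.+1 V) (('X_b - 'X_c) * P u').
  move=> u' b c Hu Hs [Hsz].
  set V' := rem c (rem b V).
  have uV2 : uniq V' by rewrite !rem_uniq.
  have memV' x : (x \in V') = [&& x != c, x != b & x \in V].
    by rewrite (mem_rem_uniq _ (rem_uniq _ uV)) inE (mem_rem_uniq _ uV) inE.
  move: Hu => /= /andP[/norP[bc bu'] /andP[cu' uu']].
  have bV : b \in V by apply: Hs; rewrite inE eqxx.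
  have cV : c \in V by apply: Hs; rewrite !inE eqxx orbT.
  have szV' : size V' = (size V).-2.
    rewrite size_rem ?size_rem //.
    by rewrite (mem_rem_uniq _ uV) inE eq_sym bc.
  have IH' := IH n'.-1 V' uV2.
  have sub' : {subset u' <= V'}.
    move=> x xu; rewrite memV'.
    have -> : x \in V by apply: Hs; rewrite !inE xu !orbT.
    rewrite andbT; apply/andP; split; apply/negP => /eqP E; subst x.
    + exact: (negP cu' xu).
    + exact: (negP bu' xu).
  have Hg := IH' (ltac:(by rewrite -ltnS prednK)) (ltac:(rewrite szV'; lia))
    (ltac:(move=> p /hc; lia)) u' uu'
    sub' Hsz.
  apply: gen_scale Hg => g [A' [uA' sA' szA' ->]].
  have bA' : b \notin A' by apply/negP => /sA'; rewrite memV' eqxx andbF.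
  have cA' : c \notin A' by apply/negP => /sA'; rewrite memV' eqxx.
  rewrite es_diff; apply: genB; apply: gen_in.
  - exists (b :: A'); split => //=; [by rewrite bA' | | by rewrite szA' prednK].
    move=> x; rewrite inE => /orP[/eqP -> //|/sA']; by rewrite memV' => /and3P[].
  - exists (c :: A'); split => //=; [by rewrite cA' | | by rewrite szA' prednK].
    move=> x; rewrite inE => /orP[/eqP -> //|/sA']; by rewrite memV' => /and3P[].
have Hc := claim Hrel (t := [::]) (s := A) (i := k.+1) uA sA (erefl _).
rewrite tA P_nil !mul1r szA in Hc.
have HC : gen (Gk n' k.+1 V) ('C(n', k.+1)%:R * P u).
  apply: gen_eq (genB (gen_in (_ : Gk n' k.+1 V (es A k.+1))) Hc) _; last by ring.
  by exists A.
have cn0 := binom_neq0 hc kn.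
apply: gen_eq (genM ((('C(n', k.+1)%:R : K)^-1)%:MP) HC) _.
by rewrite -(rmorph_nat (@mpolyC N K)) mulrA -rmorphM mulVf // rmorph1 mul1r.
Qed.


Lemma msym_X (s : 'S_N) i : msym s ('X_i : MP) = 'X_(s i).
Proof.
rewrite msymX; congr mpolyX; apply/mnmP => j; rewrite mnmE !mnm1E.
by rewrite (canF_eq (permK s)).
Qed.

Lemma msym_P (s : 'S_N) u : msym s (P u) = P (map s u).
Proof. rewrite /P rmorph_prod big_map; apply: eq_bigr => i _; exact: msym_X. Qed.

Lemma msym_es (s : 'S_N) u k : msym s (es u k) = es (map s u) k.
Proof.
elim: u k => [|b u IH] [|k] /=; rewrite ?msym1 ?msym0 //.
by rewrite msymD msymM msym_X !IH.
Qed.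

Definition sfirst m : seq 'I_N := [seq i <- enum 'I_N | (nat_of_ord i < m)%N].

Lemma sfirst_val m : (m <= N)%N -> map val (sfirst m) = iota 0 m.
Proof.
move=> mN; rewrite /sfirst (_ : map val _ = filter (fun x => (x < m)%N) (map val (enum 'I_N))); last by rewrite filter_map.
rewrite val_enum_ord.
rewrite -(subnKC mN) iotaD filter_cat add0n.
rewrite (eq_in_filter (a2 := predT)) ?filter_predT; last by move=> x; rewrite mem_iota.
rewrite (eq_in_filter (a2 := pred0)) ?filter_pred0 ?cats0 //.
by move=> x; rewrite mem_iota /= => /andP[/leq_gtF ->].
Qed.

Lemma sfirst_uniq m : uniq (sfirst m).
Proof. by rewrite filter_uniq ?enum_uniq. Qed.

Lemma sfirst_size m : (m <= N)%N -> size (sfirst m) = m.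
Proof. by move=> mN; rewrite -(size_map val) sfirst_val // size_iota. Qed.

Lemma perm_exists (x0 : 'I_N) m (u : seq 'I_N) : uniq u -> size u = m ->
  exists s : 'S_N, map s (sfirst m) = u.
Proof.
move=> uu su.
set w := u ++ [seq x <- enum 'I_N | x \notin u].
have uw : uniq w.
  rewrite cat_uniq uu filter_uniq ?enum_uniq // andbT.
  by apply/hasPn => x; rewrite mem_filter => /andP[].
have sw : size w = N.
  have Hp : perm_eq w (enum 'I_N).
    apply: uniq_perm => //; first exact: enum_uniq.
    move=> x; rewrite mem_cat mem_filter mem_enum andbT; by case: (x \in u).
  by rewrite (perm_size Hp) size_enum_ord.
have mN : (m <= N)%N by move: sw; rewrite size_cat su; lia.
have finj : injective (fun i : 'I_N => nth x0 w i).
  move=> i j /eqP; rewrite nth_uniq ?sw // => /eqP; exact: val_inj.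
exists (perm finj).
rewrite (eq_map (permE finj)).
have -> : [seq nth x0 w (val i) | i <- sfirst m] = map (nth x0 w) (map val (sfirst m)).
  by rewrite -map_comp.
by rewrite sfirst_val // map_nth_iota0 ?sw // take_size_cat.
Qed.


Lemma sub_cons_set (b : 'I_N) s (h : {set 'I_N}) : b \notin h ->
  (h \subset [set x in b :: s]) = (h \subset [set x in s]).
Proof.
move=> bh; apply/subsetP/subsetP => H x xh; have := H x xh; rewrite !inE //.
  by case/orP => // /eqP E; rewrite -E xh in bh.
by move->; rewrite orbT.
Qed.

Lemma es_set s k : uniq s -> es s k =
  \sum_(h : {set 'I_N} | (#|h| == k) && (h \subset [set x in s])) \prod_(i in h) 'X_i.
Proof.
elim: s k => [|b s IH] k /=.
  move=> _; rewrite (eq_bigl (fun h => (h == set0) && (k == 0)%N)).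
    case: k => [|k].
      by rewrite (big_pred1 set0) ?big_set0 // => h /=; rewrite andbT.
    by rewrite big_pred0 // => h; rewrite andbF.
  move=> h; have -> : [set x in [::]] = set0 :> {set 'I_N} by apply/setP => x; rewrite !inE.
  rewrite subset0; case: (h =P set0) => [->|]; rewrite ?cards0 ?andbF //=.
  by rewrite andbT eq_sym.
case/andP => bs us; case: k => [|k].
  rewrite (big_pred1 set0) ?big_set0 // => h /=.
  by rewrite cards_eq0; case: (h =P set0) => [->|] //=; rewrite sub0set.
rewrite !IH // [RHS](bigID [pred h : {set _} | b \in h]) /= addrC; congr (_ + _).
  apply: eq_bigl => h; case bh: (b \in h); rewrite ?andbF ?andbT.
    apply/negbTE/negP => /andP[_ /subsetP /(_ b bh)]; by rewrite inE (negbTE bs).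
  by rewrite sub_cons_set ?bh.
rewrite mulr_sumr [RHS](reindex_onto (fun h => b |: h) (fun h => h :\ b)) /=; last first.
  by move=> h /andP[_ bh]; apply: setD1K.
apply: eq_big => j.
  case bj: (b \in j).
    have -> : ((b |: j) :\ b == j) = false.
      by apply/negbTE/negP => /eqP E; have := bj; rewrite -E !inE eqxx.
    rewrite andbF; apply/negbTE/negP => /andP[_ /subsetP /(_ b bj)].
    by rewrite inE (negbTE bs).
  rewrite setU1K ?bj // eqxx setU11 !andbT cardsU1 bj /= add1n eqSS.
  by rewrite subUset sub1set inE mem_head /= sub_cons_set ?bj.
case/andP => _ /subsetP sj.
have bj : b \notin j by apply/negP => /sj; rewrite inE (negbTE bs).
by rewrite big_setU1.
Qed.

Lemma esym_firstE n d : (n <= N)%N -> esym_first K N n d = es (sfirst n) d.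
Proof.
move=> nN; rewrite es_set ?sfirst_uniq // /esym_first; apply: eq_bigl => h.
congr (_ && _); apply/forall_inP/subsetP => H x xh.
  by rewrite inE mem_filter mem_enum andbT; apply: H.
by move: (H x xh); rewrite inE mem_filter => /andP[].
Qed.

Lemma prod_firstE d : prod_first K N d = P (sfirst d).
Proof. by rewrite /prod_first /P big_filter big_enum_cond. Qed.


Lemma orbit_genE (g p : MP) :
  orbit_ideal g p <-> gen (fun h => exists s : 'S_N, h = msym s g) p.
Proof.
split.
  case=> sq ->; elim: sq => [|x sq IH]; first by rewrite big_nil; apply: gen0.
  by rewrite big_cons; apply: genC IH; exists x.1.
elim=> [|c h q [s ->] _ [sq Eq]]; first by exists [::]; rewrite big_nil.
by exists ((s, c) :: sq); rewrite big_cons Eq.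
Qed.

Definition Qs (s : seq 'I_N) k : MP -> Prop :=
  fun h => exists u, [/\ uniq u, size u = k, {subset u <= s} & h = P u].

Lemma es_gen s : uniq s -> forall k, gen (Qs s k) (es s k).
Proof.
elim: s => [|b s IH] /=.
  move=> _ [|k]; last exact: gen0.
  by apply: gen_in; exists [::]; rewrite P_nil.
case/andP => bs us [|k].
  by apply: gen_in; exists [::]; rewrite P_nil.
apply: genD.
  apply: gen_trans (IH us k.+1) => h [u [uu su ss ->]]; apply: gen_in.
  by exists u; split => // x /ss; rewrite inE orbC => ->.
apply: gen_scale (IH us k) => h [u [uu su ss ->]]; apply: gen_in.
exists (b :: u); split => //=; last by rewrite P_cons.
- by rewrite uu andbT; apply/negP => /ss; apply/negP.
- by rewrite su.
- by move=> x; rewrite !inE => /orP[->|/ss ->]; rewrite ?orbT.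
Qed.

End S.

Unset Implicit Arguments.

Theorem proposition2p1 (K : fieldType) (n d N : nat)
  (hchar : forall p : nat, p \in [pchar K] -> (n < p)%N)
  (hd1 : (1 <= d)%N) (hdn : (d <= n)%N) (hN : (n + d <= N)%N) :
  forall p : {mpoly K[N]},
    orbit_ideal (esym_first K N n d) p <-> orbit_ideal (prod_first K N d) p.
Proof.
have N0 : (0 < N)%N by lia.
pose x0 : 'I_N := Ordinal N0.
have nN : (n <= N)%N by lia.
have dN : (d <= N)%N by lia.
move=> p; rewrite !orbit_genE; split.
  apply: gen_trans => h [s ->].
  rewrite esym_firstE // msym_es.
  have us : uniq (map s (sfirst N n)) by rewrite map_inj_uniq ?sfirst_uniq //; exact: perm_inj.
  apply: (gen_trans _ (es_gen K us d)) => g [u [uu su _ ->]].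
  have [t tu] := perm_exists x0 uu su.
  by apply: gen_in; exists t; rewrite prod_firstE msym_P tu.
apply: gen_trans => h [s ->].
rewrite prod_firstE msym_P.
have us : uniq (map s (sfirst N d)) by rewrite map_inj_uniq ?sfirst_uniq //; exact: perm_inj.
have := @Lk K N d n (enum 'I_N) (enum_uniq _) hdn (ltac:(by rewrite size_enum_ord))
  hchar _ us (ltac:(by move=> x; rewrite mem_enum)) (ltac:(by rewrite size_map sfirst_size)).
apply: gen_trans => g [A [uA _ sA ->]].
have [t tA] := perm_exists x0 uA sA.
by apply: gen_in; exists t; rewrite esym_firstE // msym_es tA.
Qed.
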